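(* Let $\mathcal{E}$ be an extensive category with finite limits. If the full subcategory $\mathrm{Dec}\,\mathcal{E} \to \mathcal{E}$ is detached, then it is the least detached subcategory of $\mathcal{E}$, i.e. it is contained in every detached full reflective subcategory of $\mathcal{E}$.
   Context: Extensive category: a category with finite coproducts such that $\mathcal{E}/X \times \mathcal{E}/Y \to \mathcal{E}/(X+Y)$ is an equivalence for all $X,Y$. An object $X$ is decidable if its diagonal $X\to X\times X$ is a summand (a map $X\to Z$ is a summand if some $Y\to Z$ makes $X\to Z\leftarrow Y$ a coproduct); $\mathrm{Dec}\,\mathcal{E}$ is the full subcategory of decidable objects. For an extensive category $\mathcal{E}$ with finite products, a full reflective subcategory $\mathcal{S}\to\mathcal{E}$ (with reflector $L$ and unit $\sigma$) is detached if it is closed under finite coproducts, closed under subobjects (for every $A\in\mathcal{S}$ and mono $X\to A$, the unit $X \to LX$ is an isomorphism, i.e. $X$ lies in $\mathcal{S}$ up to iso), and the left adjoint $L$ preserves finite products. *)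

(* Defs.v *)
From Stdlib Require Import ProofIrrelevance.

Set Implicit Arguments.
Unset Strict Implicit.

Record Category := {
  ob :> Type;
  hom : ob -> ob -> Type;
  cid : forall A, hom A A;
  comp : forall A B D, hom B D -> hom A B -> hom A D;
  comp_id_l : forall A B (f : hom A B), comp (cid B) f = f;
  comp_id_r : forall A B (f : hom A B), comp f (cid A) = f;
  comp_assoc : forall A B D E (h : hom D E) (g : hom B D) (f : hom A B),
      comp h (comp g f) = comp (comp h g) f
}.

Arguments hom {c} _ _.
Arguments cid {c} A.
Arguments comp {c A B D} _ _.

Notation "g ∘ f" := (comp g f) (at level 40, left associativity).

Section Basic.
Context {C : Category}.

Definition is_iso {A B : C} (f : hom A B) : Prop :=
  exists g : hom B A, g ∘ f = cid A /\ f ∘ g = cid B.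

Definition is_mono {A B : C} (f : hom A B) : Prop :=
  forall X (g h : hom X A), f ∘ g = f ∘ h -> g = h.

Definition is_terminal (T : C) : Prop :=
  forall X : C, exists! t : hom X T, True.

Definition is_initial (I : C) : Prop :=
  forall X : C, exists! t : hom I X, True.

Definition is_product {X Y P : C} (p1 : hom P X) (p2 : hom P Y) : Prop :=
  forall W (f : hom W X) (g : hom W Y),
    exists! h : hom W P, p1 ∘ h = f /\ p2 ∘ h = g.

Definition is_coproduct {X Y Z : C} (i1 : hom X Z) (i2 : hom Y Z) : Prop :=
  forall W (f : hom X W) (g : hom Y W),
    exists! h : hom Z W, h ∘ i1 = f /\ h ∘ i2 = g.

Definition is_equalizer {E X Y : C} (e : hom E X) (f g : hom X Y) : Prop :=
  f ∘ e = g ∘ e /\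
  forall W (k : hom W X), f ∘ k = g ∘ k -> exists! h : hom W E, e ∘ h = k.

Definition is_summand {X Z : C} (f : hom X Z) : Prop :=
  exists (Y : C) (g : hom Y Z), is_coproduct f g.

End Basic.

Record FinCoproducts (C : Category) := {
  cinit : C;
  cinit_initial : is_initial cinit;
  cp : C -> C -> C;
  inl : forall X Y : C, hom X (cp X Y);
  inr : forall X Y : C, hom Y (cp X Y);
  copair : forall (X Y W : C), hom X W -> hom Y W -> hom (cp X Y) W;
  copair_inl : forall X Y W (f : hom X W) (g : hom Y W), copair f g ∘ inl X Y = f;
  copair_inr : forall X Y W (f : hom X W) (g : hom Y W), copair f g ∘ inr X Y = g;
  copair_uniq : forall X Y W (f : hom X W) (g : hom Y W) (h : hom (cp X Y) W),
      h ∘ inl X Y = f -> h ∘ inr X Y = g -> h = copair f g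
}.

Arguments cinit {C} _.
Arguments cp {C} _ _ _.
Arguments inl {C} _ X Y.
Arguments inr {C} _ X Y.
Arguments copair {C} _ {X Y W} _ _.

Record FinLimits (C : Category) := {
  term : C;
  term_terminal : is_terminal term;
  prod : C -> C -> C;
  pr1 : forall X Y : C, hom (prod X Y) X;
  pr2 : forall X Y : C, hom (prod X Y) Y;
  pair : forall (W X Y : C), hom W X -> hom W Y -> hom W (prod X Y);
  pair_pr1 : forall W X Y (f : hom W X) (g : hom W Y), pr1 X Y ∘ pair f g = f;
  pair_pr2 : forall W X Y (f : hom W X) (g : hom W Y), pr2 X Y ∘ pair f g = g;
  pair_uniq : forall W X Y (f : hom W X) (g : hom W Y) (h : hom W (prod X Y)),
      pr1 X Y ∘ h = f -> pr2 X Y ∘ h = g -> h = pair f g;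
  has_equalizers : forall (X Y : C) (f g : hom X Y),
      exists (E : C) (e : hom E X), is_equalizer e f g
}.

Arguments term {C} _.
Arguments prod {C} _ _ _.
Arguments pr1 {C} _ X Y.
Arguments pr2 {C} _ X Y.
Arguments pair {C} _ {W X Y} _ _.

Record Functor (C D : Category) := {
  fobj :> C -> D;
  fmap : forall A B : C, hom A B -> hom (fobj A) (fobj B);
  fmap_id : forall A, fmap (cid A) = cid (fobj A);
  fmap_comp : forall A B E (g : hom B E) (f : hom A B),
      fmap (g ∘ f) = fmap g ∘ fmap f
}.
Arguments fmap {C D} _ {A B} _.

Definition is_equivalence {C D : Category} (F : Functor C D) : Prop :=
  exists G : Functor D C,
    (exists eta : forall X : C, hom X (G (F X)),
        (forall X, is_iso (eta X)) /\
        (forall X Y (f : hom X Y), eta Y ∘ f = fmap G (fmap F f) ∘ eta X)) /\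
    (exists eps : forall Y : D, hom (F (G Y)) Y,
        (forall Y, is_iso (eps Y)) /\
        (forall Y Y' (g : hom Y Y'), eps Y' ∘ fmap F (fmap G g) = g ∘ eps Y)).

Lemma sig_eq_pi {A : Type} {P : A -> Prop} (x y : {a : A | P a}) :
  proj1_sig x = proj1_sig y -> x = y.
Proof.
  destruct x as [a pa], y as [b pb]; simpl; intros ->.
  f_equal; apply proof_irrelevance.
Qed.

Section Slice.
Context (C : Category) (X : C).

Definition slice_ob := {A : C & hom A X}.
Definition slice_hom (a b : slice_ob) :=
  {f : hom (projT1 a) (projT1 b) | projT2 b ∘ f = projT2 a}.

Definition slice_id (a : slice_ob) : slice_hom a a :=
  exist _ (cid (projT1 a)) (comp_id_r (projT2 a)).

Program Definition slice_comp (a b d : slice_ob)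
  (g : slice_hom b d) (f : slice_hom a b) : slice_hom a d :=
  exist _ (proj1_sig g ∘ proj1_sig f) _.
Next Obligation.
  destruct g as [g Hg], f as [f Hf]; simpl.
  rewrite comp_assoc, Hg; exact Hf.
Qed.

Lemma slice_id_l (a b : slice_ob) (f : slice_hom a b) :
  slice_comp (slice_id b) f = f.
Proof. apply sig_eq_pi; simpl; apply comp_id_l. Qed.
Lemma slice_id_r (a b : slice_ob) (f : slice_hom a b) :
  slice_comp f (slice_id a) = f.
Proof. apply sig_eq_pi; simpl; apply comp_id_r. Qed.
Lemma slice_assoc (a b d e : slice_ob) (h : slice_hom d e) (g : slice_hom b d)
  (f : slice_hom a b) :
  slice_comp h (slice_comp g f) = slice_comp (slice_comp h g) f.
Proof. apply sig_eq_pi; simpl; apply comp_assoc. Qed.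

Definition Slice : Category :=
  {| ob := slice_ob; hom := slice_hom; cid := slice_id; comp := slice_comp;
     comp_id_l := slice_id_l; comp_id_r := slice_id_r;
     comp_assoc := slice_assoc |}.

End Slice.

Section ProdCat.
Context (C D : Category).

Program Definition ProdCat : Category :=
  {| ob := (C * D)%type;
     hom a b := (hom (fst a) (fst b) * hom (snd a) (snd b))%type;
     cid a := (cid (fst a), cid (snd a));
     comp a b d g f := (fst g ∘ fst f, snd g ∘ snd f) |}.
Next Obligation. destruct f; simpl; rewrite !comp_id_l; reflexivity. Qed.
Next Obligation. destruct f; simpl; rewrite !comp_id_r; reflexivity. Qed.
Next Obligation. destruct h, g, f; simpl; rewrite !comp_assoc; reflexivity. Qed.

End ProdCat.

Section Extensive.
Context {C : Category} (K : FinCoproducts C).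

Definition cpmap {A B A' B' : C} (f : hom A A') (g : hom B B') :
  hom (cp K A B) (cp K A' B') :=
  copair K (inl K A' B' ∘ f) (inr K A' B' ∘ g).

Lemma copair_comp {A B W V : C} (f : hom A W) (g : hom B W) (h : hom W V) :
  h ∘ copair K f g = copair K (h ∘ f) (h ∘ g).
Proof.
  apply copair_uniq.
  - rewrite <- comp_assoc, copair_inl; reflexivity.
  - rewrite <- comp_assoc, copair_inr; reflexivity.
Qed.

Lemma copair_cpmap {A B A' B' W : C} (f : hom A A') (g : hom B B')
  (u : hom A' W) (v : hom B' W) :
  copair K u v ∘ cpmap f g = copair K (u ∘ f) (v ∘ g).
Proof.
  unfold cpmap; rewrite copair_comp, !comp_assoc, copair_inl, copair_inr.
  reflexivity.
Qed.

Definition sum_ob (X Y : C) (ab : Slice X * Slice Y) : Slice (cp K X Y) :=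
  existT _ (cp K (projT1 (fst ab)) (projT1 (snd ab)))
           (cpmap (projT2 (fst ab)) (projT2 (snd ab))).

Program Definition sum_hom (X Y : C) (ab ab' : Slice X * Slice Y)
  (fg : hom (c := ProdCat (Slice X) (Slice Y)) ab ab') :
  hom (c := Slice (cp K X Y)) (sum_ob ab) (sum_ob ab') :=
  exist _ (cpmap (proj1_sig (fst fg)) (proj1_sig (snd fg))) _.
Next Obligation.
  destruct ab as [[A a] [B b]], ab' as [[A' a'] [B' b']],
           fg as [[f Hf] [g Hg]]; simpl in *.
  unfold cpmap at 1; rewrite copair_cpmap, <- !comp_assoc, Hf, Hg.
  reflexivity.
Qed.

Lemma sum_hom_id (X Y : C) (ab : Slice X * Slice Y) :
  sum_hom (cid (c := ProdCat (Slice X) (Slice Y)) ab) = cid (sum_ob ab).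
Proof.
  apply sig_eq_pi; simpl. unfold cpmap. symmetry; apply copair_uniq;
  rewrite comp_id_l, comp_id_r; reflexivity.
Qed.

Lemma sum_hom_comp (X Y : C) (a b d : Slice X * Slice Y)
  (g : hom (c := ProdCat (Slice X) (Slice Y)) b d)
  (f : hom (c := ProdCat (Slice X) (Slice Y)) a b) :
  sum_hom (g ∘ f) = sum_hom g ∘ sum_hom f.
Proof.
  apply sig_eq_pi; destruct g as [[g1 Hg1] [g2 Hg2]], f as [[f1 Hf1] [f2 Hf2]].
  simpl. unfold cpmap at 2.
  rewrite copair_cpmap. unfold cpmap. rewrite !comp_assoc. reflexivity.
Qed.

Definition sum_functor (X Y : C) :
  Functor (ProdCat (Slice X) (Slice Y)) (Slice (cp K X Y)) :=
  @Build_Functor (ProdCat (Slice X) (Slice Y)) (Slice (cp K X Y))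
    (@sum_ob X Y) (@sum_hom X Y) (@sum_hom_id X Y) (@sum_hom_comp X Y).

Definition extensive : Prop :=
  forall X Y : C, is_equivalence (sum_functor X Y).

End Extensive.

Definition decidable {C : Category} (L : FinLimits C) (X : C) : Prop :=
  is_summand (pair L (cid X) (cid X)).

(** * Full reflective subcategories (given by a predicate on objects) *)
Record Reflection (C : Category) (P : C -> Prop) := {
  rL : C -> C;
  rL_in : forall X, P (rL X);
  runit : forall X : C, hom X (rL X);
  rext : forall (X A : C), P A -> hom X A -> hom (rL X) A;
  rext_comm : forall X A (HA : P A) (f : hom X A), rext HA f ∘ runit X = f;
  rext_uniq : forall X A (HA : P A) (f : hom X A) (g : hom (rL X) A),
      g ∘ runit X = f -> g = rext HA f
}.
Arguments rL {C P} _ _.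
Arguments runit {C P} _ X.
Arguments rext {C P} _ {X A} _ _.

Definition rmap {C : Category} {P : C -> Prop} (R : Reflection P)
  {X Y : C} (f : hom X Y) : hom (rL R X) (rL R Y) :=
  rext R (rL_in R Y) (runit R Y ∘ f).

Section Detached.
Context {C : Category} (L : FinLimits C) (K : FinCoproducts C).
Context {P : C -> Prop} (R : Reflection P).

(** X lies in S (up to isomorphism) iff its unit is an isomorphism. *)
Definition in_sub (X : C) : Prop := is_iso (runit R X).

Definition closed_fin_coproducts : Prop :=
  in_sub (cinit K) /\ forall A B, P A -> P B -> in_sub (cp K A B).

Definition closed_subobjects : Prop :=
  forall (A X : C) (m : hom X A), P A -> is_mono m -> in_sub X.

Definition preserves_fin_products : Prop :=
  is_terminal (rL R (term L)) /\
  forall X Y : C,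
    is_product (rmap R (pr1 L X Y)) (rmap R (pr2 L X Y)).

Definition detached : Prop :=
  closed_fin_coproducts /\ closed_subobjects /\ preserves_fin_products.

End Detached.

(* Main.v *)
Require Import Defs.

Section Helpers.
Context {C : Category} (K : FinCoproducts C).

Lemma initial_maps_eq (O : C) (HO : is_initial O) W (f g : hom O W) : f = g.
Proof.
  destruct (HO W) as [t [_ Ht]].
  rewrite <- (Ht f I). apply Ht. exact I.
Qed.

Lemma copair_ext {A B W : C} (f f' : hom (cp K A B) W) :
  f ∘ inl K A B = f' ∘ inl K A B -> f ∘ inr K A B = f' ∘ inr K A B -> f = f'.
Proof.
  intros H1 H2.
  rewrite (@copair_uniq _ K _ _ _ (f ∘ inl K A B) (f ∘ inr K A B) f eq_refl eq_refl).
  symmetry; apply copair_uniq; auto.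
Qed.

Lemma disjoint (ext : extensive K) (A B Z : C) (u : hom Z A) (v : hom Z B) :
  inl K A B ∘ u = inr K A B ∘ v -> forall W (f f' : hom Z W), f = f'.
Proof.
  intros Huv W f f'.
  set (O := cinit K).
  assert (HO := cinit_initial K).
  destruct (HO A) as [iA _]. destruct (HO B) as [iB _].
  destruct (HO (cp K O Z)) as [i1 _]; destruct (HO (cp K Z O)) as [i2 _].
  destruct (ext A B) as [G [[eta [Heta Hnat]] _]].
  pose (a := (existT (fun D => hom D A) Z u, existT (fun D => hom D B) O iB)
         : ob (ProdCat (Slice A) (Slice B))).
  pose (b := (existT (fun D => hom D A) O iA, existT (fun D => hom D B) Z v)
         : ob (ProdCat (Slice A) (Slice B))).
  assert (Hm : cpmap K iA v ∘ copair K (inr K O Z) i1 = cpmap K u iB).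
  { unfold cpmap at 2. apply copair_uniq.
    - rewrite <- comp_assoc, copair_inl. unfold cpmap. rewrite copair_inr.
      symmetry; exact Huv.
    - apply initial_maps_eq; exact HO. }
  assert (Hm' : cpmap K u iB ∘ copair K i2 (inl K Z O) = cpmap K iA v).
  { unfold cpmap at 2. apply copair_uniq.
    - apply initial_maps_eq; exact HO.
    - rewrite <- comp_assoc, copair_inr. unfold cpmap. rewrite copair_inl.
      exact Huv. }
  pose (m := exist _ (copair K (inr K O Z) i1) Hm
        : hom (c := Slice (cp K A B)) (sum_functor K A B a) (sum_functor K A B b)).
  pose (m' := exist _ (copair K i2 (inl K Z O)) Hm'
        : hom (c := Slice (cp K A B)) (sum_functor K A B b) (sum_functor K A B a)).
  assert (Hmm : m' ∘ m = cid _).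
  { apply sig_eq_pi. simpl.
    rewrite copair_comp, copair_inr.
    symmetry; apply copair_uniq.
    - rewrite comp_id_l; reflexivity.
    - apply initial_maps_eq; exact HO. }
  destruct (Heta a) as [ea' [Ha1 Ha2]].
  destruct (Heta b) as [eb' [Hb1 Hb2]].
  pose (al := eb' ∘ fmap G m ∘ eta a).
  pose (be := ea' ∘ fmap G m' ∘ eta b).
  assert (Hba : be ∘ al = cid a).
  { unfold al, be. rewrite !comp_assoc.
    rewrite <- (comp_assoc (ea' ∘ fmap G m') (eta b) eb'), Hb2, comp_id_r.
    rewrite <- (comp_assoc ea' (fmap G m') (fmap G m)), <- fmap_comp, Hmm, fmap_id,
      comp_id_r. exact Ha1. }
  assert (Hzz : proj1_sig (fst be) ∘ proj1_sig (fst al) = cid Z).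
  { exact (f_equal (fun p => proj1_sig (fst p)) Hba). }
  rewrite <- (comp_id_r f), <- (comp_id_r f'), <- Hzz, !comp_assoc.
  f_equal. apply initial_maps_eq; exact HO.
Qed.

End Helpers.

Lemma rmap_nat {C : Category} {P : C -> Prop} (R : Reflection P) {A B : C} (f : hom A B) :
  rmap R f ∘ runit R A = runit R B ∘ f.
Proof. unfold rmap; apply rext_comm. Qed.

Theorem corollary2p10 (C : Category) (L : FinLimits C) (K : FinCoproducts C) :
  extensive K ->
  forall RD : Reflection (decidable L),
  detached L K RD ->
  forall (P : C -> Prop) (R : Reflection P),
  detached L K R ->
  forall X : C, decidable L X -> in_sub R X.
Proof.
  intros ext RD _ P R [Hcop [Hsub Hprod]] X [Y [c Hc]].
  apply (Hsub (rL R X) X (runit R X)); [apply rL_in|].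
  intros W g h Hgh.
  set (d := pair L (cid X) (cid X)) in *.
  destruct (Hc (cp K X Y) (inl K X Y) (inr K X Y)) as [j [[Hjd Hjc] _]].
  assert (Hsec : copair K d c ∘ j = cid _).
  { destruct (Hc (prod L X X) d c) as [u0 [_ Hu]].
    transitivity u0; [symmetry|]; apply Hu; split.
    - rewrite <- comp_assoc, Hjd, copair_inl; reflexivity.
    - rewrite <- comp_assoc, Hjc, copair_inr; reflexivity.
    - apply comp_id_l.
    - apply comp_id_l. }
  set (T := rL R (term L)).
  destruct (term_terminal L X) as [tX _]; destruct (term_terminal L Y) as [tY _].
  set (a := runit R (term L) ∘ tX). set (b := runit R (term L) ∘ tY).
  set (chi0 := copair K (inl K T T ∘ a) (inr K T T ∘ b)).
  set (chi := chi0 ∘ j).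
  assert (Hchid : chi ∘ d = inl K T T ∘ a).
  { unfold chi, chi0; rewrite <- comp_assoc, Hjd, copair_inl; reflexivity. }
  assert (Hin2 : in_sub R (cp K T T)) by (apply (proj2 Hcop); apply rL_in).
  destruct Hin2 as [s' [Hs1 Hs2]].
  assert (Hpair : runit R (prod L X X) ∘ pair L g h = runit R (prod L X X) ∘ (d ∘ h)).
  { destruct (proj2 Hprod X X W (runit R X ∘ g) (runit R X ∘ h)) as [hh [_ Hu]].
    transitivity hh; [symmetry|]; apply Hu; split.
    - rewrite comp_assoc, rmap_nat, <- comp_assoc, pair_pr1; reflexivity.
    - rewrite comp_assoc, rmap_nat, <- comp_assoc, pair_pr2; reflexivity.
    - rewrite comp_assoc, rmap_nat, <- comp_assoc, (comp_assoc (pr1 L X X)).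
      unfold d; rewrite pair_pr1, comp_id_l; symmetry; exact Hgh.
    - rewrite comp_assoc, rmap_nat, <- comp_assoc, (comp_assoc (pr2 L X X)).
      unfold d; rewrite pair_pr2, comp_id_l; reflexivity. }
  assert (Hfac : forall (V : C) (k : hom V (prod L X X)),
    chi ∘ k = s' ∘ (rext R (rL_in R (cp K T T)) (runit R _ ∘ chi) ∘ (runit R _ ∘ k))).
  { intros V k. rewrite (comp_assoc (rext _ _ _)), rext_comm, !comp_assoc, Hs1, comp_id_l.
    reflexivity. }
  assert (Hchik : chi ∘ pair L g h = inl K T T ∘ a ∘ h).
  { rewrite Hfac, Hpair, <- Hfac, comp_assoc, Hchid; reflexivity. }
  set (k' := j ∘ pair L g h).
  destruct (ext X Y) as [G [_ [eps [Heps _]]]].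
  set (w := existT (fun D => hom D (cp K X Y)) W k' : Slice (cp K X Y)).
  destruct (Heps w) as [e' [He1 He2]].
  set (e := eps w) in *. clearbody e.
  remember (G w) as o eqn:Ho. clear Ho.
  destruct o as [[W1 w1] [W2 w2]].
  destruct e as [ee Hee]. destruct e' as [ee' Hee'].
  assert (Hee2 : ee ∘ ee' = cid W) by exact (f_equal (@proj1_sig _ _) He2).
  simpl in Hee. change (hom (cp K W1 W2) W) in ee.
  assert (Hdis : forall V (f f' : hom W2 V), f = f').
  { intros V0 f0 f0'; apply (@disjoint C K ext T T W2 (a ∘ h ∘ ee ∘ inr K W1 W2) (b ∘ w2)).
    transitivity (chi0 ∘ (k' ∘ ee) ∘ inr K W1 W2).
    { unfold k'. rewrite (comp_assoc _ _ ee), (comp_assoc chi0 j). fold chi. rewrite Hchik.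
      rewrite !comp_assoc. reflexivity. }
    rewrite Hee. unfold cpmap. rewrite <- comp_assoc, copair_inr, comp_assoc.
    unfold chi0. rewrite copair_inr. rewrite <- comp_assoc. reflexivity. }
  assert (Hg : forall (pr : hom (prod L X X) X), pr ∘ d = cid X ->
            pr ∘ pair L g h ∘ ee = copair K w1 (pr ∘ c ∘ w2)).
  { intros pr Hpr.
    rewrite <- (comp_id_l (pair L g h)), <- Hsec, <- !comp_assoc.
    rewrite (comp_assoc j).
    change (j ∘ pair L g h) with k'. rewrite Hee.
    rewrite copair_cpmap, copair_comp, comp_assoc, Hpr, comp_id_l, !comp_assoc. reflexivity. }
  rewrite <- (comp_id_r g), <- (comp_id_r h), <- Hee2, !comp_assoc.
  f_equal.
  transitivity (copair K w1 (pr1 L X X ∘ c ∘ w2)).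
  { rewrite <- Hg; [rewrite pair_pr1; reflexivity | unfold d; apply pair_pr1]. }
  transitivity (copair K w1 (pr2 L X X ∘ c ∘ w2)).
  { f_equal. apply Hdis. }
  rewrite <- Hg; [rewrite pair_pr2; reflexivity | unfold d; apply pair_pr2].
Qed.
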